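(* Let $(x(n))_{n\geq0}$ and $(y(n))_{n\geq0}$ be sequences of nonnegative integers with $x(0)=1$, $y(0)=0$, such that for every $n \geq 1$ the set $\{x(n), y(n)\}$ consists of the two smallest nonnegative integers not belonging to $\{x(k) : k \leq n-1\} \cup \{y(k) : k \leq n-1\}$, and such that for all $n \geq 0$, $x(x(n))$ and $y(y(n))$ are even while $x(y(n))$ and $y(x(n))$ are odd. Then $x(n) = a(n)$ and $y(n) = b(n)$ for all $n \geq 0$.
   Context: A nonnegative integer is odious if the sum of its binary digits is odd and evil if it is even. $(a(n))_{n\geq0}$ is the increasing sequence of odious numbers and $(b(n))_{n\geq 0}$ the increasing sequence of evil numbers, both indexed from $0$. *)

(* Defs.v *)
From mathcomp Require Import all_boot.
Set Implicit Arguments. Unset Strict Implicit. Unset Printing Implicit Defensive.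

Fixpoint bsum_aux (fuel n : nat) : nat :=
  match fuel with
  | 0 => 0
  | f.+1 => if n is 0 then 0 else odd n + bsum_aux f n./2
  end.
Definition bsum (n : nat) : nat := bsum_aux n n.

Definition odious (n : nat) : bool := odd (bsum n).
Definition evil (n : nat) : bool := ~~ odd (bsum n).

(* a n = n-th (0-indexed) odious number, b n = n-th evil number.
   Among 0..4n+3 there are 2n+2 odious and 2n+2 evil numbers
   (each pair {2k,2k+1} contains one of each), so the bound suffices. *)
Definition a (n : nat) : nat := nth 0 [seq m <- iota 0 (4 * n + 4) | odious m] n.
Definition b (n : nat) : nat := nth 0 [seq m <- iota 0 (4 * n + 4) | evil m] n.

Definition fresh (x y : nat -> nat) (n m : nat) : Prop :=
  forall k, k < n -> m <> x k /\ m <> y k.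

Definition two_smallest_fresh (x y : nat -> nat) (n : nat) : Prop :=
  [/\ x n <> y n, fresh x y n (x n), fresh x y n (y n) &
      forall m, fresh x y n m -> m <> x n -> m <> y n ->
        x n < m /\ y n < m].

(* Main.v *)
Require Import Defs.
From mathcomp Require Import all_boot.
From mathcomp Require Import zify.

Definition tm n := odd (bsum n).

Lemma bsum_auxE f g n : n <= f -> n <= g -> bsum_aux f n = bsum_aux g n.
Proof.
elim: f g n => [|f IH] [|g] [|n] //= Hf Hg.
congr (_ + _); apply: IH.
- rewrite leq_uphalf_double -addnn; lia.
- rewrite leq_uphalf_double -addnn; lia.
Qed.

Lemma bsum2 n (c : bool) : bsum (2 * n + c) = c + bsum n.
Proof.
rewrite /bsum; case E: (2 * n + c) => [|k].
  by case: n E => [|n]; case: c => //=; lia.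
have -> : bsum_aux k.+1 k.+1 = odd k.+1 + bsum_aux k (k.+1)./2 by [].
have -> : k.+1 = c + n.*2 by rewrite -mul2n; lia.
rewrite half_bit_double oddD odd_double addbF.
rewrite (bsum_auxE _ n) //; lia.
Qed.

Lemma tm2 n (c : bool) : tm (2 * n + c) = c (+) tm n.
Proof. by rewrite /tm bsum2 oddD; case: c. Qed.

Lemma filt_odious k :
  [seq m <- iota 0 (2 * k) | odious m] = [seq 2 * i + ~~ tm i | i <- iota 0 k].
Proof.
elim: k => [|k IH] //.
rewrite (_ : 2 * k.+1 = 2 * k + 2); last lia.
rewrite iotaD filter_cat IH.
rewrite (_ : iota 0 k.+1 = iota 0 k ++ [:: k]); last by rewrite -addn1 iotaD.
rewrite map_cat /= !add0n.
have h0 : odious (2 * k) = tm k by have := tm2 k false; rewrite /= addn0.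
have h1 : odious (2 * k).+1 = ~~ tm k by have := tm2 k true; rewrite /= addn1.
rewrite h0 h1; case: (tm k) => /=; by rewrite ?addn0 ?addn1.
Qed.

Lemma filt_evil k :
  [seq m <- iota 0 (2 * k) | evil m] = [seq 2 * i + tm i | i <- iota 0 k].
Proof.
elim: k => [|k IH] //.
rewrite (_ : 2 * k.+1 = 2 * k + 2); last lia.
rewrite iotaD filter_cat IH.
rewrite (_ : iota 0 k.+1 = iota 0 k ++ [:: k]); last by rewrite -addn1 iotaD.
rewrite map_cat /= !add0n.
have h0 : evil (2 * k) = ~~ tm k by have := tm2 k false; rewrite /= addn0 => h; exact: (congr1 negb h).
have h1 : evil (2 * k).+1 = tm k by have := tm2 k true; rewrite /= addn1 => h; rewrite -[tm k]negbK; exact: (congr1 negb h).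
rewrite h0 h1; case: (tm k) => /=; by rewrite ?addn0 ?addn1.
Qed.

Lemma aE n : a n = 2 * n + ~~ tm n.
Proof.
rewrite /a (_ : 4 * n + 4 = 2 * (2 * n + 2)); last lia.
rewrite filt_odious (nth_map 0) ?size_iota; last lia.
by rewrite nth_iota; last lia.
Qed.

Lemma bE n : b n = 2 * n + tm n.
Proof.
rewrite /b (_ : 4 * n + 4 = 2 * (2 * n + 2)); last lia.
rewrite filt_evil (nth_map 0) ?size_iota; last lia.
by rewrite nth_iota; last lia.
Qed.

Theorem theorem6 (x y : nat -> nat) :
  x 0 = 1 -> y 0 = 0 ->
  (forall n, 1 <= n -> two_smallest_fresh x y n) ->
  (forall n, ~~ odd (x (x n)) /\ ~~ odd (y (y n)) /\ odd (x (y n)) /\ odd (y (x n))) ->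
  forall n, x n = a n /\ y n = b n.
Proof.
move=> x0 y0 Hts Hpar.
have Hpair : forall n, (x n = 2 * n /\ y n = 2 * n + 1) \/ (x n = 2 * n + 1 /\ y n = 2 * n).
  move=> n; elim: n {-2}n (leqnn n) => [|N IH] n Hn.
    have -> : n = 0 by lia. by right; rewrite x0 y0.
  case: (leqP n N) => Hn'; first exact: IH.
  have En : n = N.+1 by lia. subst n.
  have Hfr : forall m, fresh x y N.+1 m <-> 2 * N.+1 <= m.
    move=> m; split.
    - move=> Hf; case: (leqP (2 * N.+1) m) => // Hm.
      have [k1 Hk] : exists k, k < N.+1 /\ (m = 2 * k \/ m = 2 * k + 1).
        exists (m./2); have := odd_double_half m; rewrite -mul2n.
        case: (odd m) => /= h; split; lia.
      case: Hk => Hk Hm'. have [h1 h2] := Hf k1 Hk.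
      case: (IH k1 ltac:(lia)) => [[e1 e2]|[e1 e2]]; lia.
    - move=> Hm k Hk; case: (IH k ltac:(lia)) => [[e1 e2]|[e1 e2]]; lia.
  have [Hne Hx Hy Hmin] := Hts N.+1 isT.
  move/Hfr: Hx => Hx; move/Hfr: Hy => Hy.
  have H1 : x N.+1 = 2 * N.+1 \/ y N.+1 = 2 * N.+1.
    case: (eqVneq (x N.+1) (2 * N.+1)) => [|h1]; first by left.
    case: (eqVneq (y N.+1) (2 * N.+1)) => [|h2]; first by right.
    move/eqP: h1 => h1; move/eqP: h2 => h2.
    have [] := Hmin _ (proj2 (Hfr _) (leqnn _)) (fun e => h1 (esym e)) (fun e => h2 (esym e)); lia.
  have H2 : x N.+1 = 2 * N.+1 + 1 \/ y N.+1 = 2 * N.+1 + 1.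
    case: (eqVneq (x N.+1) (2 * N.+1 + 1)) => [|h1]; first by left.
    case: (eqVneq (y N.+1) (2 * N.+1 + 1)) => [|h2]; first by right.
    move/eqP: h1 => h1; move/eqP: h2 => h2.
    have [] := Hmin (2 * N.+1 + 1) (proj2 (Hfr _) (leq_addr 1 _)) (fun e => h1 (esym e)) (fun e => h2 (esym e)); lia.
  lia.
pose e n := x n == 2 * n + 1.
have xE : forall n, x n = 2 * n + e n.
  move=> n; rewrite /e; case: (Hpair n) => [[-> _]|[-> _]]; last by rewrite eqxx.
  have -> : (2*n == 2*n+1) = false by apply/eqP; lia. by rewrite addn0.
have yE : forall n, y n = 2 * n + ~~ e n.
  move=> n; rewrite /e; case: (Hpair n) => [[-> ->]|[-> ->]]; last by rewrite eqxx addn0.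
  have -> : (2*n == 2*n+1) = false by apply/eqP; lia. by [].
have oddx : forall m, odd (x m) = e m.
  by move=> m; rewrite xE oddD oddM /= oddb.
have rec : forall n (c : bool), e (2 * n + c) = c (+) e n.
  move=> n c; have [p1 [_ [p3 _]]] := Hpar n.
  rewrite oddx xE in p1; rewrite oddx yE in p3.
  by case: c; case: (e n) p1 p3 => /=; rewrite ?addn0 ?addn1 => p1 p3;
     rewrite ?p3 ?(negbTE p1) ?p1.
have eT : forall n, e n = ~~ tm n.
  move=> n; elim: n {-2}n (leqnn n) => [|N IH] n Hn.
    have -> : n = 0 by lia. by rewrite /e x0.
  case: n Hn => [|n] Hn; first by rewrite /e x0.
  have -> : n.+1 = 2 * (n.+1)./2 + odd n.+1.
    by rewrite -[n.+1 in LHS]odd_double_half -mul2n addnC.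
  rewrite rec tm2 IH; last by rewrite leq_half_double -addnn; lia.
  by case: (odd _); case: (tm _).
move=> n; rewrite aE bE xE yE eT negbK; done.
Qed.
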